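(* Let $k,m\in\mathbb{N}$ with $m<k\le 2m$, $k$ even, and $\gcd(2k+1,2(2m+1))=1$; let $a>0$ satisfy $\frac{1}{4km+3k+m+1}\le\frac{a}{2k+1}\le\frac{1}{4km+k+3m+1}$. For $s=0,\dots,4m+1$, $n=0,\dots,2k$ define $X_{sn}=\frac{s}{2(2m+1)}-\frac{n}{2k+1}$ and $\Phi_{sn}(0,0)=\sum_{l\in\mathbb{Z}}Q_2\big(2a(2m+1)(l+X_{sn})\big)$ with $Q_2(x)=(1-|x|)\chi_{[-1,1]}(x)$. Let $A$ be the $2m\times k$ matrix with entries $A_{sn}=\Phi_{sn}(0,0)-\Phi_{s,2k+1-n}(0,0)$, $s=1,\dots,2m$, $n=1,\dots,k$. Then $\operatorname{rank}(A)\le k-1$. *)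

(* Defs.v *)
From HB Require Import structures.
From mathcomp Require Import all_boot all_order all_algebra.
From mathcomp Require Import classical_sets fsbigop reals.
Set Implicit Arguments. Unset Strict Implicit. Unset Printing Implicit Defensive.
Import Order.TTheory GRing.Theory Num.Theory.
Local Open Scope ring_scope.
Local Open Scope classical_set_scope.

Definition Q2 {R : realType} (x : R) : R :=
  if `|x| <= 1 then 1 - `|x| else 0.

Definition Xsn {R : realType} (k m s n : nat) : R :=
  s%:R / (2 * (2 * m + 1)%:R) - n%:R / (2 * k + 1)%:R.

(* Phi_{sn}(0,0) = sum_{l in Z} Q_2(2a(2m+1)(l + X_{sn})); the sum has finite
   support (Q2 compactly supported, a > 0), rendered as the fsbigop finite-support sum. *)
Definition Phi00 {R : realType} (a : R) (k m s n : nat) : R :=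
  \sum_(l \in [set: int])
     Q2 (2 * a * (2 * m + 1)%:R * (l%:~R + Xsn k m s n)).

Definition Amat {R : realType} (a : R) (k m : nat) : 'M[R]_(2 * m, k) :=
  \matrix_(i < 2 * m, j < k)
     (Phi00 a k m i.+1 j.+1 - Phi00 a k m i.+1 (2 * k + 1 - j.+1)%N).

(* Main.v *)
Require Import Defs.
From HB Require Import structures.
From mathcomp Require Import all_boot all_order all_algebra.
From mathcomp Require Import classical_sets fsbigop reals.
From mathcomp Require Import ring lra zify.
Import Order.TTheory GRing.Theory Num.Theory.
Local Open Scope ring_scope.

Section NT.
Local Open Scope nat_scope.
Definition rr (K N n : nat) := minn ((n * N) %% K) (K - (n * N) %% K).

Lemma dist_int (K N n d : nat) (t : int) : (0 < K)%N -> (d <= rr K N n)%N ->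
  (d%:Z <= `|t * K%:Z - (n * N)%:Z|)%R.
Proof.
rewrite /rr => K0 hd.
have e := divn_eq (n * N) K.
have hr := ltn_pmod (n * N) K0.
move: hd hr e; set q := (n * N) %/ K; set r := (n * N) %% K => hd hr e.
rewrite e.
case: (lerP t q%:Z) => ht.
  have : (t * K%:Z <= q%:Z * K%:Z)%R by rewrite ler_pM2r // ?ltz_nat //; lia.
  lia.
have : ((q%:Z + 1) * K%:Z <= t * K%:Z)%R by rewrite ler_wpM2r //; lia.
lia.
Qed.

Lemma notdvd (k N n : nat) : coprime (2 * k + 1) N -> (0 < n)%N -> (n <= 2 * k)%N ->
  ~~ ((2 * k + 1) %| n * N).
Proof.
move=> co n0 nk; rewrite Gauss_dvdl //; apply/negP => /dvdn_leq; lia.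
Qed.

Lemma rr_pos (k N n : nat) : coprime (2 * k + 1) N -> (0 < n)%N -> (n <= k)%N ->
  (0 < rr (2 * k + 1) N n)%N.
Proof.
move=> co n0 nk; rewrite /rr.
have := @notdvd k N n co n0 (ltac:(lia) : (n <= 2 * k)%N); rewrite /dvdn => h.
have := ltn_pmod (n * N) (ltac:(lia) : (0 < 2 * k + 1)%N).
move: h; set r := (n * N) %% _ => h1 h2.
lia.
Qed.

Lemma rr_inj (k N n1 n2 : nat) : coprime (2 * k + 1) N ->
  (0 < n1)%N -> (n1 <= k)%N -> (0 < n2)%N -> (n2 <= k)%N ->
  rr (2 * k + 1) N n1 = rr (2 * k + 1) N n2 -> n1 = n2.
Proof.
move=> co a1 b1 a2 b2; rewrite /rr.
have h1 := ltn_pmod (n1 * N) (ltac:(lia) : (0 < 2 * k + 1)%N).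
have h2 := ltn_pmod (n2 * N) (ltac:(lia) : (0 < 2 * k + 1)%N).
have hD := modnDm (n1 * N) (n2 * N) (2 * k + 1).
have hE : forall n n', (n' <= n)%N -> (n * N == n' * N %[mod 2 * k + 1]) ->
    (0 < n')%N -> (n <= k)%N -> n = n'.
  move=> n n' le eq p0 p1.
  have lm : (n' * N <= n * N)%N by rewrite leq_mul2r le orbT.
  move: eq; rewrite (eqn_mod_dvd _ lm) -mulnBl Gauss_dvdl //.
  move/dvdn_leq => h; have {}h := (fun x => h x); clear -le h p0 p1.
  case: (ltnP n' n) => hl; last by lia.
  have := h (ltac:(lia)); lia.
move: h1 h2 hD; set r1 := (n1 * N) %% _; set r2 := (n2 * N) %% _ => h1 h2 hD he.
have [e|e] : r1 = r2 \/ (r1 + r2 = 2 * k + 1)%N.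
  by clearbody r1 r2; clear -h1 h2 he; lia.
- have eq12 : (n1 * N == n2 * N %[mod 2 * k + 1]) by rewrite -/r1 -/r2 e.
  case: (leqP n2 n1) => hl.
    exact: hE.
  symmetry; apply: hE => //; [lia | by rewrite eq_sym].
- have : (2 * k + 1 %| n1 * N + n2 * N).
    by rewrite /dvdn -hD -/r1 -/r2 e modnn.
  rewrite -mulnDl Gauss_dvdl // => /dvdn_leq h; clear -h a1 a2 b1 b2.
  have := h (ltac:(lia)); lia.
Qed.

Lemma card_J (k m N : nat) : m < k -> coprime (2 * k + 1) N ->
  #|[set j : 'I_k | rr (2 * k + 1) N j.+1 < k - m]| <= (k - m).-1.
Proof.
move=> mk co; rewrite cardE.
set s := enum _.
have u : uniq [seq rr (2 * k + 1) N (val j).+1 | j <- s].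
  rewrite map_inj_in_uniq ?enum_uniq // => x y _ _ /rr_inj h.
  apply: val_inj; by have := h co (ltn0Sn _) (ltn_ord x) (ltn0Sn _) (ltn_ord y) => /succn_inj.
have -> : size s = size [seq rr (2 * k + 1) N (val j).+1 | j <- s] by rewrite size_map.
rewrite -[(k - m).-1](size_iota 1); apply: uniq_leq_size => // x /mapP [j].
rewrite /s mem_enum inE => hj ->; rewrite mem_iota.
have := @rr_pos k N j.+1 co (ltn0Sn _) (ltn_ord j).
have e : rr (2 * k + 1) N (val j).+1 = rr (2 * k + 1) N j.+1 by [].
rewrite e; move: (rr (2 * k + 1) N j.+1) hj => r hj h; lia.
Qed.
End NT.

Local Open Scope classical_set_scope.
Section Ana.
Variable R : realType.

Lemma Q2_cases (t : R) :
  (t <= -1 /\ Q2 t = 0) \/ ((-1 <= t /\ t <= 0) /\ Q2 t = 1 + t) \/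
  ((0 <= t /\ t <= 1) /\ Q2 t = 1 - t) \/ (1 <= t /\ Q2 t = 0).
Proof.
rewrite /Q2; case: (lerP 0 t) => t0.
  rewrite ger0_norm //; case: (lerP t 1) => t1.
    by right; right; left; split; lra.
  by right; right; right; split; lra.
rewrite ltr0_norm //; case: (lerP (- t) 1) => t1.
  by right; left; split; [lra|ring].
by left; split; lra.
Qed.

Lemma Q2_zero (t : R) : 1 <= `|t| -> Q2 t = 0.
Proof.
move=> h; rewrite /Q2; case: ifP => // h2.
have : `|t| = 1 by apply/eqP; rewrite eq_le h h2.
by move=> ->; rewrite subrr.
Qed.

Lemma Q2N (t : R) : Q2 (- t) = Q2 t.
Proof. by rewrite /Q2 normrN. Qed.

Definition g3 (b u : R) := Q2 (u - b) + Q2 u + Q2 (u + b).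

Lemma g3N b u : g3 b (- u) = g3 b u.
Proof.
rewrite /g3 (_ : - u - b = - (u + b)); last by ring.
rewrite (_ : - u + b = - (u - b)); last by ring.
rewrite !Q2N; ring.
Qed.

Lemma sum3 (b t : R) : 1 <= b -> -1 <= t -> t <= 1 ->
  \sum_(l \in [set: int]) Q2 (b * (l%:~R + t)) = g3 b (b * t).
Proof.
move=> b1 t1 t2.
rewrite -(fsbig_widen [set` [:: (-1)%R; 0%R; 1%R]] setT) //; last first.
  move=> l [_ /=]; rewrite !inE => hl.
  apply: Q2_zero.
  have hl2 : (2 <= `|l|)%R.
    move: hl => /= hl. idtac.
    lia.
  have : (2 : R) <= `|l%:~R : R|.
    by rewrite -intr_norm (ler_int R 2).
  move=> h; rewrite normrM ger0_norm; last lra.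
  have : 1 <= `|l%:~R + t : R|.
    have := ler_normB (l%:~R + t : R) t; rewrite addrK.
    have : `|t| <= 1 by rewrite ler_norml; lra.
    lra.
  move=> h'; nra.
rewrite -fsbig_seq //.
rewrite !big_cons big_nil /g3 /= addr0 addrA.
by congr (_ + _ + _); congr Q2; rewrite ?intrN ?mulrN1 /=; ring.
Qed.



Lemma Q2_zl (t : R) : t <= -1 -> Q2 t = 0.
Proof. by move=> h; apply: Q2_zero; rewrite ler0_norm; lra. Qed.
Lemma Q2_zr (t : R) : 1 <= t -> Q2 t = 0.
Proof. by move=> h; apply: Q2_zero; rewrite ger0_norm; lra. Qed.
Lemma Q2_l (t : R) : -1 <= t -> t <= 0 -> Q2 t = 1 + t.
Proof. by move=> h1 h2; rewrite /Q2 ler0_norm ?ifT; lra. Qed.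
Lemma Q2_r (t : R) : 0 <= t -> t <= 1 -> Q2 t = 1 - t.
Proof. by move=> h1 h2; rewrite /Q2 ger0_norm ?ifT; lra. Qed.

Lemma Gconst (be ep w : R) : 0 < be ->
  1 - be/2 <= ep -> be/2 - 1 <= ep -> 0 <= ep ->
  -be <= w -> w <= be/2 ->
  (w <= -be - ep \/ -be + ep <= w) ->
  (w <= -(be/2) - ep \/ -(be/2) + ep <= w) ->
  (w <= 0 - ep \/ 0 + ep <= w) ->
  (w <= be/2 - ep \/ be/2 + ep <= w) ->
  g3 be w + g3 be (w + be/2) = 2 - be/2.
Proof.
move=> hb h1 h2 h3 h4 h5 c1 c2 c3 c4.
have [[i1 i2]|[[i1 i2]|[i1 i2]]] : (-be+ep <= w /\ w <= -(be/2) - ep) \/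
  (-(be/2)+ep <= w /\ w <= -ep) \/ (ep <= w /\ w <= be/2 - ep).
- by case: c1 => c1; case: c2 => c2; case: c3 => c3; case: c4 => c4; lra.
- rewrite /g3 (@Q2_zl (w - be)) ?(@Q2_zl w) ?(@Q2_r (w + be))
    ?(@Q2_zl (w + be/2 - be)) ?(@Q2_l (w + be/2)) ?(@Q2_zr (w + be/2 + be)); lra.
- rewrite /g3 (@Q2_zl (w - be)) ?(@Q2_l w) ?(@Q2_zr (w + be))
    ?(@Q2_zl (w + be/2 - be)) ?(@Q2_r (w + be/2)) ?(@Q2_zr (w + be/2 + be)); lra.
- rewrite /g3 (@Q2_zl (w - be)) ?(@Q2_r w) ?(@Q2_zr (w + be))
    ?(@Q2_l (w + be/2 - be)) ?(@Q2_zr (w + be/2)) ?(@Q2_zr (w + be/2 + be)); lra.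
Qed.

Lemma Phi_eq (a : R) k m s n : 1 <= 2 * a * (2 * m + 1)%:R ->
  (s <= 2 * (2 * m + 1))%N -> (n <= 2 * k + 1)%N ->
  Phi00 a k m s n = g3 (2 * a * (2 * m + 1)%:R)
    (a / (2 * k + 1)%:R * (s%:R * (2 * k + 1)%:R - n%:R * (2 * (2 * m + 1))%:R)).
Proof.
move=> hb hs hn.
have hK : (0 : R) < (2 * k + 1)%:R by rewrite ltr0n addn1.
have hM : (0 : R) < (2 * m + 1)%:R by rewrite ltr0n addn1.
have e1 : 0 <= s%:R / (2 * (2 * m + 1)%:R) :> R by rewrite divr_ge0 // mulr_ge0 // ltW.
have e2 : s%:R / (2 * (2 * m + 1)%:R) <= 1 :> R.
  by rewrite ler_pdivrMr ?mulr_gt0 // mul1r -natrM ler_nat.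
have e3 : 0 <= n%:R / (2 * k + 1)%:R :> R by rewrite divr_ge0 // ltW.
have e4 : n%:R / (2 * k + 1)%:R <= 1 :> R.
  by rewrite ler_pdivrMr // mul1r ler_nat.
rewrite /Phi00 sum3 // /Xsn; try lra.
congr g3; rewrite natrM; field.
have k0 : (0:R) <= k%:R := ler0n _ _.
have m0 : (0:R) <= m%:R := ler0n _ _.
rewrite gt_eqF ?gt_eqF //=; lra.
Qed.

Lemma absdisj (al y d x c : R) : 0 < al -> d <= `|y| ->
  (x - c = al * y \/ x - c = - (al * y)) ->
  x <= c - al * d \/ c + al * d <= x.
Proof.
move=> ha hd he.
have h : al * d <= `|x - c|.
  by case: he => ->; rewrite ?normrN normrM gtr0_norm // ler_pM2l.
case: (lerP 0 (x - c)) => hx; [rewrite ger0_norm in h|rewrite ltr0_norm in h]; lra.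
Qed.

Lemma entry_eq (a : R) (k m s s' n : nat) :
  0 < a ->
  1 <= 2 * a * (2 * m + 1)%:R ->
  1 - a * (2 * m + 1)%:R <= a / (2 * k + 1)%:R * (k - m)%:R ->
  a * (2 * m + 1)%:R - 1 <= a / (2 * k + 1)%:R * (k - m)%:R ->
  (s + s' = 2 * m + 1)%N -> (0 < s)%N -> (0 < s')%N -> (0 < n)%N -> (n <= k)%N ->
  (forall t : int, (k - m)%:R <= `| t%:~R * (2 * k + 1)%:R - n%:R * (2 * (2 * m + 1))%:R : R|) ->
  Phi00 a k m s n - Phi00 a k m s (2 * k + 1 - n) =
  Phi00 a k m s' n - Phi00 a k m s' (2 * k + 1 - n).
Proof.
move=> ha hb hlo hhi hss hs hs' hn hnk hdist.
rewrite !Phi_eq //; try lia.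
set K := (2 * k + 1)%:R; set N := (2 * (2 * m + 1))%:R; set M := (2 * m + 1)%:R.
set al := a / K; set be := 2 * a * M.
have hK : 0 < K by rewrite ltr0n addn1.
have hM : 0 < M by rewrite ltr0n addn1.
have hN : N = 2 * M by rewrite /N natrM.
have hal : 0 < al by rewrite divr_gt0.
have hbe : be = al * K * N.
  rewrite /al /be hN; field.
  have k0 : (0:R) <= k%:R := ler0n _ _.
  rewrite gt_eqF //; lra.
have hKn : (2 * k + 1 - n)%N%:R = K - n%:R :> R by rewrite natrB //; lia.
have hs'R : s'%:R = M - s%:R :> R by rewrite /M -hss natrD addrAC subrr add0r.
rewrite hKn hs'R.
set w1 := al * (s%:R * K - n%:R * N).
set w2 := al * (s%:R * K - (K - n%:R) * N).
have e3 : al * ((M - s%:R) * K - n%:R * N) = - (w2 + be / 2).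
  by rewrite /w2 ?hbe hN; field.
have e4 : al * ((M - s%:R) * K - (K - n%:R) * N) = - (w1 + be / 2).
  by rewrite /w1 ?hbe hN; field.
rewrite e3 e4 !g3N.
have ep0 : 0 <= al * (k - m)%:R by rewrite mulr_ge0 // ltW.
have hlo' : 1 - be / 2 <= al * (k - m)%:R.
  by rewrite (_ : be / 2 = a * M) //; rewrite /be; field.
have hhi' : be / 2 - 1 <= al * (k - m)%:R.
  by rewrite (_ : be / 2 = a * M) //; rewrite /be; field.
have rng : forall X : R, -(K * N) <= X -> X <= K * N / 2 -> -be <= al * X /\ al * X <= be / 2.
  move=> X h1 h2; rewrite hbe; split.
    by rewrite (_ : - (al * K * N) = al * - (K * N)) ?ler_pM2l //; ring.
  by rewrite (_ : al * K * N / 2 = al * (K * N / 2)) ?ler_pM2l //; field.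
have s1 : 1 <= s%:R :> R by rewrite ler1n.
have s2 : s%:R <= M - 1 :> R.
  by rewrite /M -hss natrD lerBrDr lerD2l ler1n.
have n1 : 1 <= n%:R :> R by rewrite ler1n.
have n2 : n%:R <= k%:R :> R by rewrite ler_nat.
have eK : K = 2 * k%:R + 1 by rewrite /K natrD natrM.
have [r1 r2] : -be <= w1 /\ w1 <= be / 2.
  apply: rng; rewrite hN eK; nra.
have [r3 r4] : -be <= w2 /\ w2 <= be / 2.
  apply: rng; rewrite hN eK; nra.
have G1 := @Gconst be (al * (k - m)%:R) w1.
have G2 := @Gconst be (al * (k - m)%:R) w2.
have hbp : 0 < be by rewrite /be !mulr_gt0.
have D := fun (t : int) (c x : R) (E : x - c = al * (t%:~R * K - n%:R * N) \/
   x - c = - (al * (t%:~R * K - n%:R * N))) => @absdisj al _ _ x c hal (hdist t) E.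
have M' : ((2 * m + 1)%:Z)%:~R = M :> R by [].
have S' : (s%:Z)%:~R = s%:R :> R by [].
have E1 : g3 be w1 + g3 be (w1 + be / 2) = 2 - be / 2.
  apply: G1 => //.
  - apply: (D (s%:Z + 2 * (2 * m + 1)%:Z)); left.
    by rewrite rmorphD rmorphM /= S' M' /w1 ?hbe hN; field.
  - apply: (D (s%:Z + (2 * m + 1)%:Z)); left.
    by rewrite rmorphD /= S' M' /w1 ?hbe hN; field.
  - apply: (D (s%:Z)); left.
    by rewrite S' /w1; ring.
  - apply: (D (s%:Z - (2 * m + 1)%:Z)); left.
    by rewrite rmorphB /= S' M' /w1 ?hbe hN; field.
have E2 : g3 be w2 + g3 be (w2 + be / 2) = 2 - be / 2.
  apply: G2 => //.
  - apply: (D (- s%:Z)); right.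
    by rewrite rmorphN /= S' /w2 ?hbe hN; field.
  - apply: (D ((2 * m + 1)%:Z - s%:Z)); right.
    by rewrite rmorphB /= S' M' /w2 ?hbe hN; field.
  - apply: (D (2 * (2 * m + 1)%:Z - s%:Z)); right.
    by rewrite rmorphB rmorphM /= S' M' /w2 ?hbe hN; field.
  - apply: (D (3 * (2 * m + 1)%:Z - s%:Z)); right.
    by rewrite rmorphB rmorphM /= S' M' /w2 ?hbe hN; field.
lra.
Qed.

End Ana.

Local Close Scope classical_set_scope.
Theorem lemma3p14 (R : realType) (k m : nat) (a : R)
  (hmk : (m < k)%N) (hkm : (k <= 2 * m)%N) (hkeven : ~~ odd k)
  (hgcd : gcdn (2 * k + 1) (2 * (2 * m + 1)) = 1%N)
  (ha : 0 < a)
  (hlo : 1 / (4 * k * m + 3 * k + m + 1)%:R <= a / (2 * k + 1)%:R)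
  (hhi : a / (2 * k + 1)%:R <= 1 / (4 * k * m + k + 3 * m + 1)%:R) :
  (\rank (Amat a k m) <= k.-1)%N.
Proof.
have co : coprime (2 * k + 1) (2 * (2 * m + 1)) by rewrite /coprime hgcd.
have k0 : (0:R) <= k%:R := ler0n _ _.
have m0 : (0:R) <= m%:R := ler0n _ _.
have hK : (0 : R) < (2 * k + 1)%:R by rewrite ltr0n addn1.
have hM : (0 : R) < (2 * m + 1)%:R by rewrite ltr0n addn1.
have eP1 : (4 * k * m + 3 * k + m + 1)%N%:R = (2 * k + 1)%:R * (2 * m + 1)%:R + (k - m)%:R :> R.
  rewrite -natrM -natrD; congr _%:R; lia.
have eP2 : (4 * k * m + k + 3 * m + 1)%N%:R = (2 * k + 1)%:R * (2 * m + 1)%:R - (k - m)%:R :> R.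
  apply/eqP; rewrite eq_sym subr_eq -natrM -natrD; apply/eqP; congr _%:R; lia.
have P1 : (0 : R) < (4 * k * m + 3 * k + m + 1)%N%:R by rewrite ltr0n; lia.
have P2 : (0 : R) < (4 * k * m + k + 3 * m + 1)%N%:R by rewrite ltr0n; lia.
have lo : 1 - a * (2 * m + 1)%:R <= a / (2 * k + 1)%:R * (k - m)%:R.
  move: hlo; rewrite ler_pdivrMr // eP1 => h.
  have : a / (2 * k + 1)%:R * ((2 * k + 1)%:R * (2 * m + 1)%:R + (k - m)%:R)
     = a * (2 * m + 1)%:R + a / (2 * k + 1)%:R * (k - m)%:R.
    by field; rewrite gt_eqF //; lra.
  lra.
have hi : a * (2 * m + 1)%:R - 1 <= a / (2 * k + 1)%:R * (k - m)%:R.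
  move: hhi; rewrite ler_pdivlMr // eP2 => h.
  have : a / (2 * k + 1)%:R * ((2 * k + 1)%:R * (2 * m + 1)%:R - (k - m)%:R)
     = a * (2 * m + 1)%:R - a / (2 * k + 1)%:R * (k - m)%:R.
    by field; rewrite gt_eqF //; lra.
  lra.
have hb : 1 <= 2 * a * (2 * m + 1)%:R.
  have : (k - m)%:R <= (2 * k + 1)%:R * (2 * m + 1)%:R :> R.
    by rewrite -natrM ler_nat; nia.
  move=> h1.
  have : a / (2 * k + 1)%:R * (k - m)%:R <= a * (2 * m + 1)%:R.
    rewrite mulrAC -mulrA ler_pM2l // ler_pdivrMr //.
    by rewrite mulrC.
  lra.
set J := [set j : 'I_k | (rr (2 * k + 1) (2 * (2 * m + 1)) j.+1 < k - m)%N].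
have cJ : (#|J| <= (k - m).-1)%N := card_J _ _ _ hmk co.
have Hent : forall (i : 'I_(2 * m)) (j : 'I_k), j \notin J ->
    Amat a k m i j = Amat a k m (rev_ord i) j.
  move=> i j hj; rewrite !mxE /=.
  have hio := ltn_ord i.
  have hss : (i.+1 + (2 * m - i.+1).+1 = 2 * m + 1)%N by clear -hio; lia.
  apply: (@entry_eq R a k m i.+1 (2 * m - i.+1).+1 j.+1 ha hb lo hi hss (ltn0Sn _) (ltn0Sn _) (ltn0Sn _) (ltn_ord j)).
  move=> t.
  have hr : (k - m <= rr (2 * k + 1) (2 * (2 * m + 1)) j.+1)%N.
    by move: hj; rewrite inE -leqNgt.
  have K0 : (0 < 2 * k + 1)%N by rewrite addn1.
  have := dist_int _ _ _ _ t K0 hr.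
  rewrite -(ler_int R) intr_norm rmorphB rmorphM /=.
  by move=> h; rewrite -natrM; exact: h.
have hm2 : (m <= 2 * m)%N by rewrite mul2n -addnn leq_addr.
pose sg := fun i : 'I_(2 * m) => if (i < m)%N then i else rev_ord i.
have tlt : forall i : 'I_(2 * m), ((if (i < m)%N then val i else (2 * m - i.+1)) < m)%N.
  by move=> [i hi0] /=; case: ifP => h; clear -hi0 h; lia.
pose ta := fun i => Ordinal (tlt i).
pose io := fun r : 'I_m => widen_ord hm2 r.
have st : sg =1 io \o ta.
  by move=> i; apply: val_inj; rewrite /sg /=; case: ifP.
set A := Amat a k m.
set A1 := rowsub sg A.
have r1 : (\rank A1 <= m)%N.
  exact: leq_trans (mxrankS (@submx_rowsub _ _ _ _ _ ta sg io A st)) (rank_leq_row _).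
set A2 := A - A1.
have r2 : (\rank A2 <= #|J|)%N.
  rewrite -mxrank_tr.
  pose E := \matrix_(r < #|J|) row (enum_val r) A2^T.
  apply: leq_trans (rank_leq_row E).
  apply: mxrankS; apply/row_subP => j.
  case: (boolP (j \in J)) => hj.
    have -> : row j A2^T = row (enum_rank_in hj j) E by rewrite rowK enum_rankK_in.
    exact: row_sub.
  have -> : row j A2^T = 0.
    apply/rowP => i; rewrite !mxE /sg.
    case: ifP => _; first by apply/eqP; rewrite subr_eq0.
    by have := Hent i j hj; rewrite !mxE => ->; apply/eqP; rewrite subr_eq0.
  exact: sub0mx.
have eA : A = A1 + A2 by rewrite /A2 addrC subrK.
have rA : (\rank A <= \rank A1 + \rank A2)%N.
  rewrite {1}eA; apply: leq_trans (mxrankS (addmx_sub_adds (submx_refl A1) (submx_refl A2))) _.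
  exact: mxrank_adds_leqif.
apply: (leq_trans rA); apply: (leq_trans (leq_add r1 (leq_trans r2 cJ))).
by clear -hmk; lia.
Qed.
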